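(* Let $T=(V,E)$ be a finite rooted tree, $\Pr$ a probability distribution over a finite set of queries, $k$ a positive integer, and let $R^*$ be an optimal solution to the problem of maximizing the benefit $B(R)$ over all $R\subseteq V$ with $|R|\le k$. Let $u\in V$ and let $v\in A(u)\cup\{\epsilon\}$ be the lowest ancestor of $u$ that belongs to $R^*$ (with $v=\epsilon$ if no proper ancestor of $u$ belongs to $R^*$). Let $R^*_u=T(u)\cap R^*$ and $\kappa^*_u=|T(u)\cap R^*|$. Then $R^*_u$ maximizes $B_u(R_u\cup\{v\})$ over all $R_u\subseteq T(u)$ with $|R_u|=\kappa^*_u$, i.e. $$R^*_u\in\arg\max_{R_u\subseteq T(u),\ |R_u|=\kappa^*_u} B_u(R_u\cup\{v\}).$$
   Context: $T=(V,E)$ is a finite rooted tree. $T(u)$ is the set of nodes of the subtree rooted at $u$ (including $u$); $A(u)$ is the set of proper ancestors of $u$. Each non-leaf node is associated with a variable of a finite set $X$; $\mathrm{vars}(u)$ is the set of variables associated with nodes of $T(u)$. Each query $q$ determines $Z_q\subseteq X$. For $R\subseteq V$, $w\in V$: $I_q(w,R)=1$ iff $w\in R$, $\mathrm{vars}(w)\subseteq Z_q$, and no $x\in A(w)\cap R$ has $\mathrm{vars}(x)\subseteq Z_q$; else $0$; $\mathbb{E}[I(w,R)]=\sum_q\Pr(q)I_q(w,R)$. Nodes have partial costs $c(x)$; total cost $C(w)=\sum_{x\in T(w)}c(x)$. Benefit: $B(R)=\sum_{w\in R}\mathbb{E}[I(w,R)]C(w)$. Partial benefit: $B_u(R)=\sum_{w\in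 R\cap T(u)}\mathbb{E}[I(w,R)]C(w)$. $\epsilon$ is an auxiliary symbol not in $V$ meaning ''no ancestor''; by convention $B_u(R_u\cup\{\epsilon\}):=B_u(R_u)$. *)

(* Defs.v *)
From mathcomp Require Import all_boot all_order all_algebra.
Set Implicit Arguments. Unset Strict Implicit. Unset Printing Implicit Defensive.
Import Order.TTheory GRing.Theory Num.Theory.
Local Open Scope ring_scope.

Section Tree.
Variables (V : finType) (par : V -> option V).

Fixpoint pit (n : nat) (x : V) : option V :=
  match n with 0 => Some x | n'.+1 => obind par (pit n' x) end.

(* y is a proper ancestor of x (paths in an acyclic parent graph have
   length <= #|V|, so the bound is harmless) *)
Definition anc (y x : V) : bool :=
  [exists n : 'I_#|V|.+1, (0 < (n : nat))%N && (pit n x == Some y)].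

Definition is_rooted_tree : Prop :=
  (exists r, forall x, par x = None <-> x = r) /\ (forall x, ~~ anc x x).

Definition subtree (u : V) : {set V} := [set w | (w == u) || anc u w].
Definition ancs (u : V) : {set V} := [set x | anc x u].
Definition is_leaf (x : V) : bool := [forall y, par y != Some x].

Variables (X : finType) (var : V -> X).
Definition vars (u : V) : {set X} :=
  [set var w | w in [set w in subtree u | ~~ is_leaf w]].

Variables (Q : finType) (Z : Q -> {set X}) (R : realFieldType)
  (Pr : Q -> R) (c : V -> R).

Definition Iq (q : Q) (w : V) (S : {set V}) : bool :=
  [&& w \in S, vars w \subset Z q &
      [forall x in ancs w :&: S, ~~ (vars x \subset Z q)]].

Definition EI (w : V) (S : {set V}) : R := \sum_q Pr q * (Iq q w S)%:R.

Definition Ctot (w : V) : R := \sum_(x in subtree w) c x.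

Definition benefit (S : {set V}) : R := \sum_(w in S) EI w S * Ctot w.

Definition pbenefit (u : V) (S : {set V}) : R :=
  \sum_(w in S :&: subtree u) EI w S * Ctot w.

(* B_u(R_u ∪ {v}) with v = None encoding epsilon *)
Definition pbenefit_opt (u : V) (S : {set V}) (v : option V) : R :=
  pbenefit u (match v with Some x => x |: S | None => S end).
End Tree.

(* Main.v *)
Require Import Defs.
From mathcomp Require Import all_boot all_order all_algebra.
Import Order.TTheory GRing.Theory Num.Theory.
Set Implicit Arguments. Unset Strict Implicit. Unset Printing Implicit Defensive.

Section TreeFacts.
Variables (V : finType) (par : V -> option V).
Hypothesis acyc : forall x, ~~ anc par x x.

Lemma pitD m n x : pit par (m + n) x = obind (pit par m) (pit par n x).
Proof.
elim: m => [|m IH] /=; first by case: (pit par n x).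
by rewrite /= IH; case: (pit par n x).
Qed.

Lemma pit_None n m x : pit par n x = None -> pit par (m + n) x = None.
Proof. by move=> h; rewrite pitD h. Qed.

Lemma pit_bound n x y : pit par n x = Some y -> (n <= #|V|)%N.
Proof.
move=> hn; rewrite leqNgt; apply/negP => hlt.
have hS : forall i, (i <= n)%N -> exists z, pit par i x = Some z.
  move=> i hi; case e: (pit par i x) => [z|]; first by exists z.
  by move: (pit_None (n - i) e); rewrite subnK // hn.
pose f := fun i : 'I_#|V|.+1 => odflt x (pit par i x).
case: (boolP [exists i : 'I_#|V|.+1, exists j : 'I_#|V|.+1, (i < j)%N && (f i == f j)]).
  case/existsP=> i /existsP [j /andP [hij /eqP hf]].
  have [zi hzi] := hS i (leq_trans (ltnW (ltn_ord i)) hlt).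
  have [zj hzj] := hS j (leq_trans (ltnW (ltn_ord j)) hlt).
  move: hf; rewrite /f hzi hzj /= => ez; subst zj.
  have : pit par (j - i) zi = Some zi.
    by move: hzj; rewrite -(subnK (ltnW hij)) pitD hzi /= addnK.

  move=> hp; move: (acyc zi); rewrite /anc => /negP; apply; apply/existsP.
  have hb : (j - i < #|V|.+1)%N.
    by apply: leq_ltn_trans (leq_subr _ _) (ltn_ord j).
  exists (Ordinal hb) => /=; rewrite subn_gt0 hij /=; exact/eqP.
move=> hne.
have inj : injective f.
  move=> i j hf; apply/eqP; case: (ltngtP i j) => h.
  - by move: hne; rewrite negb_exists => /forallP /(_ i);
       rewrite negb_exists => /forallP /(_ j); rewrite h hf eqxx.
  - by move: hne; rewrite negb_exists => /forallP /(_ j);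
       rewrite negb_exists => /forallP /(_ i); rewrite h hf eqxx.
  - by apply/eqP; apply: val_inj.
by move: (leq_card f inj); rewrite card_ord ltnn.
Qed.

Lemma ancP y x : reflect (exists n, (0 < n)%N /\ pit par n x = Some y) (anc par y x).
Proof.
apply: (iffP existsP).
  by case=> n /andP [h1 /eqP h2]; exists n.
case=> n [h1 h2]; have hb : (n < #|V|.+1)%N by rewrite ltnS; exact: pit_bound h2.
by exists (Ordinal hb); rewrite h1 /= h2.
Qed.

Lemma subP u w : reflect (exists m, pit par m w = Some u) (w \in subtree par u).
Proof.
rewrite inE; apply: (iffP orP).
  case=> [/eqP ->|/ancP [n [_ h]]]; [by exists 0%N | by exists n].
case=> [[|m]] h; first by left; case: h => ->.
by right; apply/ancP; exists m.+1.
Qed.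

Lemma anc_trans a b c : anc par a b -> anc par b c -> anc par a c.
Proof.
move=> /ancP [n [hn1 hn2]] /ancP [m [hm1 hm2]]; apply/ancP; exists (n + m)%N.
by rewrite addn_gt0 hn1 pitD hm2.
Qed.

Lemma ancs_sub u w x : w \in subtree par u -> x \in ancs par u -> x \in ancs par w.
Proof.
move=> /subP [m hm]; rewrite !inE => /ancP [n [h1 h2]]; apply/ancP.
by exists (n + m)%N; rewrite addn_gt0 h1 pitD hm.
Qed.

Lemma sub_anc u w x : x \in ancs par w -> x \in subtree par u -> w \in subtree par u.
Proof.
rewrite inE => /ancP [n [_ h]] /subP [m hm]; apply/subP.
by exists (m + n)%N; rewrite pitD h.
Qed.

Lemma anc_notsub u x : x \in ancs par u -> x \notin subtree par u.
Proof.
rewrite inE => /ancP [n [h1 h2]]; apply/negP => /subP [m hm].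
move: (acyc u) => /negP; apply; apply/ancP; exists (m + n)%N.
by rewrite addn_gt0 h1 orbT pitD h2.
Qed.

Lemma sub_mono x y : anc par y x -> subtree par x \subset subtree par y.
Proof.
move=> /ancP [n [_ h]]; apply/subsetP => w /subP [m hm]; apply/subP.
by exists (n + m)%N; rewrite pitD hm.
Qed.

Lemma anc_lin u w x : w \in subtree par u -> x \in ancs par w ->
  x \notin subtree par u -> x \in ancs par u.
Proof.
move=> /subP [m hm] hxa hx; move: hxa; rewrite inE => /ancP [n [h1 h2]].
case: (leqP n m) => h.
  have : pit par (m - n) x = Some u by move: hm; rewrite -(subnK h) pitD h2 /= addnK.
  by move=> hp; case/negP: hx; apply/subP; exists (m - n)%N.
rewrite inE; apply/ancP; exists (n - m)%N; rewrite subn_gt0 h; split => //.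
by move: h2; rewrite -(subnK (ltnW h)) pitD hm /= addnK.
Qed.
End TreeFacts.

Lemma forall_setU (V : finType) (A B : {set V}) (P : pred V) :
  [forall x in A :|: B, P x] = [forall x in A, P x] && [forall x in B, P x].
Proof.
apply/idP/andP => [/forallP h | [/forallP h1 /forallP h2]].
  split; apply/forallP => x; apply/implyP => hx; apply: (implyP (h x));
    by rewrite inE hx ?orbT.
apply/forallP => x; apply/implyP; rewrite inE => /orP [hx|hx].
  exact: (implyP (h1 x)).
exact: (implyP (h2 x)).
Qed.

Section Main.
Local Open Scope ring_scope.
Variables (V : finType) (par : V -> option V).
Hypothesis acyc : forall x, ~~ anc par x x.
Variables (X : finType) (var : V -> X)
  (Q : finType) (Z : Q -> {set X}) (R : realFieldType) (Pr : Q -> R) (c : V -> R).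
Variables (Rstar : {set V}) (u : V).
Local Notation T := (subtree par u).
Local Notation S Ru := ((Rstar :\: T) :|: Ru).

Lemma vars_mono x y : anc par y x -> vars par var x \subset vars par var y.
Proof.
move=> h; apply: imsetS; apply/subsetP => w; rewrite [w \in [set _ in _ | _]]inE [w \in [set _ in _ | _]]inE => /andP [h1 h2].
by rewrite h2 (subsetP (sub_mono acyc h) _ h1).
Qed.

Lemma memS (Ru : {set V}) x : Ru \subset T -> x \notin T -> (x \in S Ru) = (x \in Rstar).
Proof.
move=> hRu hx; rewrite in_setU in_setD hx /=.
have -> : (x \in Ru) = false by apply/negP => /(subsetP hRu); apply/negP.
by rewrite orbF.
Qed.

Lemma ancsS (Ru : {set V}) w : Ru \subset T -> w \in Ru ->
  ancs par w :&: S Ru = (ancs par w :&: Ru) :|: (ancs par u :&: Rstar).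
Proof.
move=> hRu hw; have hwT := subsetP hRu _ hw.
apply/setP => x; rewrite in_setU !in_setI.
case hxT: (x \in T).
  have -> : (x \in S Ru) = (x \in Ru).
    by rewrite in_setU in_setD hxT.
  have -> : (x \in ancs par u) = false.
    by apply/negP => /(anc_notsub acyc); rewrite hxT.
  by rewrite orbF.
rewrite memS ?hxT //.
have -> : (x \in Ru) = false by apply/negP => /(subsetP hRu); rewrite hxT.
rewrite andbF /=; congr (_ && _).
apply/idP/idP => h; first by apply: (anc_lin acyc hwT h); rewrite hxT.
exact: ancs_sub hwT h.
Qed.

Definition vset (v : option V) (Ru : {set V}) :=
  match v with Some x => x |: Ru | None => Ru end.

Hypothesis (v : option V).
Hypothesis hv : match v with
  | None => ancs par u :&: Rstar = set0
  | Some x => x \in ancs par u :&: Rstar /\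
      (forall y, y \in ancs par u :&: Rstar -> y = x \/ anc par y x)
  end.

Lemma Iq_in (Ru : {set V}) w q : Ru \subset T -> w \in Ru ->
  Iq par var Z q w (vset v Ru) = Iq par var Z q w (S Ru).
Proof.
move=> hRu hw; have hwT := subsetP hRu _ hw.
rewrite /Iq ancsS //.
have -> : w \in S Ru by rewrite in_setU hw orbT.
case: v hv => [x [hx hy]|h0] /=; last by rewrite hw h0 setU0.
have hxa : x \in ancs par u by move: hx; rewrite in_setI => /andP [].
have -> : ancs par w :&: (x |: Ru) = (ancs par w :&: Ru) :|: [set x].
  rewrite setIUr setUC; congr (_ :|: _).
  by apply/setIidPr; rewrite sub1set (ancs_sub acyc hwT hxa).
rewrite in_setU hw orbT /= !forall_setU; congr (_ && (_ && _)).
apply/forallP/forallP => h y; apply/implyP => hyin.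
  move: (h x); rewrite inE eqxx /= => hnx.
  case: (hy y hyin) => [->|hyx] //.
  apply/negP => hsub; move/negP: hnx; apply.
  exact: subset_trans (vars_mono hyx) hsub.
move: hyin; rewrite inE => /eqP ->.
by move: (h x); rewrite hx.
Qed.

Lemma pb_eq (Ru : {set V}) : Ru \subset T ->
  pbenefit_opt par var Z Pr c u Ru v = pbenefit par var Z Pr c u (S Ru).
Proof.
move=> hRu; rewrite /pbenefit_opt /pbenefit.
have e1 : S Ru :&: T = Ru.
  apply/setP => x; rewrite in_setI in_setU in_setD.
  case hx: (x \in T); first by rewrite /= andbT.
  by rewrite andbF; apply/esym/negP => /(subsetP hRu); rewrite hx.
have e2 : vset v Ru :&: T = Ru.
  case: v hv => [x [hx _]|_] /=; last by apply/setIidPl.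
  have hxT : x \notin T.
  move: hx; rewrite in_setI => /andP [hxa _]. exact: (@anc_notsub V par acyc u x hxa).
  rewrite setIUl (setIidPl hRu); apply/setUidPr; apply/subsetP => y.
  by rewrite in_setI inE => /andP [/eqP -> h]; rewrite h in hxT.
have -> : (match v with Some x => x |: Ru | None => Ru end) = vset v Ru by [].
rewrite e1 e2; apply: eq_bigr => w hw; congr (_ * _).
by rewrite /EI; apply: eq_bigr => q _; rewrite Iq_in.
Qed.

Lemma benefit_split (S0 : {set V}) :
  benefit par var Z Pr c S0 =
  \sum_(w in S0 | w \notin T) EI par var Z Pr w S0 * Ctot par c w
  + pbenefit par var Z Pr c u S0.
Proof.
rewrite /benefit (bigID (fun w => w \in T)) /= addrC; congr (_ + _).
by apply: eq_bigl => w; rewrite in_setI.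
Qed.

Lemma out_eq (Ru : {set V}) : Ru \subset T ->
  \sum_(w in S Ru | w \notin T) EI par var Z Pr w (S Ru) * Ctot par c w =
  \sum_(w in Rstar | w \notin T) EI par var Z Pr w Rstar * Ctot par c w.
Proof.
move=> hRu; apply: eq_big => [w|w /andP [_ hwT]].
  by case hw: (w \in T) => /=; rewrite ?andbF // memS ?hw.
congr (_ * _); rewrite /EI; apply: eq_bigr => q _; rewrite /Iq memS //.
have -> // : ancs par w :&: S Ru = ancs par w :&: Rstar.
apply/setP => x; rewrite !in_setI; case hx: (x \in ancs par w) => //=.
rewrite memS //; apply/negP => hxT; move/negP: hwT; apply.
exact: (@sub_anc V par acyc u w x hx hxT).
Qed.

End Main.

Local Open Scope ring_scope.

Theorem lemma3 (V : finType) (par : V -> option V) (X : finType) (var : V -> X)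
  (Q : finType) (Z : Q -> {set X}) (R : realFieldType) (Pr : Q -> R) (c : V -> R)
  (k : nat) (Rstar : {set V}) (u : V) (v : option V) :
  is_rooted_tree par ->
  (forall q, 0 <= Pr q) -> \sum_q Pr q = 1 ->
  (0 < k)%N ->
  (#|Rstar| <= k)%N ->
  (forall S : {set V}, (#|S| <= k)%N ->
     benefit par var Z Pr c S <= benefit par var Z Pr c Rstar) ->
  match v with
  | None => ancs par u :&: Rstar = set0
  | Some x => x \in ancs par u :&: Rstar /\
      (forall y, y \in ancs par u :&: Rstar -> y = x \/ anc par y x)
  end ->
  forall Ru : {set V}, Ru \subset subtree par u ->
    #|Ru| = #|subtree par u :&: Rstar| ->
    pbenefit_opt par var Z Pr c u Ru v
      <= pbenefit_opt par var Z Pr c u (subtree par u :&: Rstar) v.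
Proof.
move=> [_ acyc] _ _ _ hk hopt hv Ru hRu hcard.
have hRu' : (subtree par u :&: Rstar) \subset subtree par u := subsetIl _ _.
rewrite (pb_eq acyc var Z Pr c hv hRu) (pb_eq acyc var Z Pr c hv hRu').
have eR : (Rstar :\: subtree par u) :|: (subtree par u :&: Rstar) = Rstar.
  apply/setP => x; rewrite in_setU in_setD in_setI.
  by case: (x \in subtree par u); case: (x \in Rstar).
rewrite eR.
have hS : (#|(Rstar :\: subtree par u) :|: Ru| <= k)%N.
  rewrite cardsU; apply: leq_trans (leq_subr _ _) _.
  by rewrite hcard setIC addnC cardsID.
have := hopt _ hS.
rewrite (benefit_split par var Z Pr c u ((Rstar :\: subtree par u) :|: Ru))
        (benefit_split par var Z Pr c u Rstar) (out_eq acyc var Z Pr c Rstar hRu).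
by rewrite lerD2l.
Qed.
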